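(* Let $\Bbbk$ be a field and $f(t)=1+\sum_{k\ge1}a_kt^k\in\Bbbk[[t]]$, with $a_0=1$. Write $\frac1{f(t)}=\sum_{k\ge0}D_k(f)t^k$. Let $P_{f,k}(t)=(-1)^k\det\begin{pmatrix} 1&a_1t&\ldots &a_kt^k\\ 1&a_1&\ldots &a_k\\ 0&1&\ldots &a_{k-1}\\ \vdots&\ddots&\ddots&\vdots\\ 0&\ldots &1&a_1 \end{pmatrix}$ for $k\ge1$, $P_{f,0}=1$. Then: (a) $P_{f,k}(t)=\sum_{j=0}^k a_jD_{k-j}(f)\,t^j$ for all $k\ge0$; (b) for any $\Bbbk$-algebra $\mathcal A$ and $x,y\in\mathcal A$, $f(x)\,y\,f(x)^{-1}=y+z_1+z_2+\cdots$, where $z_k=\sum_{i=0}^k a_iD_{k-i}(f)\,x^iyx^{k-i}$ for $k\ge1$.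
   Context: $D_k(f)$ equals $(-1)^k\det$ of the $k\times k$ Toeplitz matrix with first row $(a_1,\dots,a_k)$, and row $r\ge2$ having zeros in its first $r-2$ entries, $1$ in entry $r-1$, then $a_1,a_2,\dots$; $D_0(f)=1$. In (b) the infinite sum is understood formally, e.g. replacing $x$ by $\tau x$ for a formal variable $\tau$ and reading the identity in $\mathcal A[[\tau]]$. *)

(* Defs.v *)
From HB Require Import structures.
From mathcomp Require Import all_boot all_order all_algebra.
Set Implicit Arguments. Unset Strict Implicit. Unset Printing Implicit Defensive.
Import Order.TTheory GRing.Theory Num.Theory.
Local Open Scope ring_scope.

(* Formal power series over a ring R are represented by their coefficient
   sequences  nat -> R ; the product in R[[tau]] is the Cauchy product. *)
Definition ps_mul (R : pzRingType) (F G : nat -> R) : nat -> R :=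
  fun n => \sum_(i < n.+1) F i * G (n - i)%N.

Definition ps_one (R : pzRingType) : nat -> R := fun n => (n == 0%N)%:R.

(* The (k+1) x (k+1) matrix whose determinant times (-1)^k is P_{f,k}(t):
   row 0 is (a_0, a_1 t, ..., a_k t^k); row r >= 1 is
   (0,...,0, a_0 = 1 (column r-1), a_1, a_2, ...). *)
Definition Pmat (K : fieldType) (a : nat -> K) (k : nat) : 'M[{poly K}]_k.+1 :=
  \matrix_(r < k.+1, j < k.+1)
    if r == 0 :> nat then (a j)%:P * 'X^j
    else if (r.-1 <= j)%N then (a (j - r.-1)%N)%:P else 0.

Definition Pfk (K : fieldType) (a : nat -> K) (k : nat) : {poly K} :=
  (-1) ^+ k * \det (Pmat a k).

(* Main.v *)
Require Import Defs.
From HB Require Import structures.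
From mathcomp Require Import all_boot all_order all_algebra.
From mathcomp Require Import zify.
From Stdlib Require Import FunctionalExtensionality.
Import Order.TTheory GRing.Theory Num.Theory.
Local Open Scope ring_scope.

Lemma eqn_sub_eq0 (j s : nat) : (s <= j)%N -> (j - s == 0)%N = (j == s).
Proof. move=> h; rewrite subn_eq0 eqn_leq h andbT. by []. Qed.

Lemma conv_shift (K : fieldType) (a D : nat -> K) :
  (forall n : nat, \sum_(i < n.+1) a i * D (n - i)%N = (n == 0%N)%:R) ->
  forall (n s j : nat), (j < n)%N ->
  \sum_(i < n) ((if (s <= i)%N then a (i - s)%N else 0) *
                (if (i <= j)%N then D (j - i)%N else 0))
  = (j == s)%:R.
Proof.
move=> hD n s j ljn.
rewrite -(big_mkord xpredT (fun i => (if (s <= i)%N then a (i - s)%N else 0) *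
                (if (i <= j)%N then D (j - i)%N else 0))).
rewrite (big_cat_nat _ (n:=j.+1)) //=.
rewrite [X in _ + X]big1_seq ?addr0; last first.
  move=> i; rewrite mem_index_iota => /andP[_ /andP[hi _]].
  by rewrite [(i <= j)%N]leqNgt hi mulr0.
case: (leqP s j) => hsj; last first.
  rewrite big1_seq; last first.
    move=> i; rewrite mem_index_iota => /andP[_ hi].
    have -> : (s <= i)%N = false by apply/negbTE; rewrite -ltnNge; exact: (leq_ltn_trans _ hsj).
    by rewrite mul0r.
  by rewrite (ltn_eqF hsj).
rewrite (big_cat_nat _ (n:=s)) //=; last exact: (leq_trans hsj).
rewrite big1_seq ?add0r; last first.
  move=> i; rewrite mem_index_iota => /andP[_ /andP[_ hi]].
  by rewrite [(s <= i)%N]leqNgt hi mul0r.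
rewrite -{1}(add0n s) big_addn.
have -> : (j.+1 - s = (j - s).+1)%N by rewrite subSn.
rewrite big_mkord -(eqn_sub_eq0 _ _ hsj) -hD; apply: eq_bigr => i _.
rewrite leq_addl addnK.
have hi := ltn_ord i.
have -> : (i + s <= j)%N by lia.
congr (_ * D _); lia.
Qed.


Theorem proposition2p3 (K : fieldType) (a : nat -> K) (D : nat -> K) :
  a 0%N = 1 ->
  (forall n : nat, \sum_(i < n.+1) a i * D (n - i)%N = (n == 0%N)%:R) ->
  (forall k : nat,
     Pfk a k = \sum_(j < k.+1) (a j * D (k - j)%N) *: 'X^j)
  /\
  (forall (A : algType K) (x y : A),
     let F : nat -> A := fun k => a k *: x ^+ k in
     let Y : nat -> A := fun k => if k == 0%N then y else 0 in
     let Z : nat -> A := fun k =>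
       if k == 0%N then y
       else \sum_(i < k.+1) (a i * D (k - i)%N) *: (x ^+ i * y * x ^+ (k - i)%N) in
     exists G : nat -> A,
       ps_mul F G = ps_one A /\ ps_mul G F = ps_one A /\
       ps_mul (ps_mul F Y) G = Z).
Proof.
move=> a0 hD.
have D0 : D 0%N = 1 by have := hD 0%N; rewrite big_ord1 a0 mul1r.
split.
- move=> k.
  pose U : 'M[{poly K}]_k.+1 :=
    \matrix_(i, j) (if ((i : nat) <= j)%N then (D (j - i)%N)%:P else 0).
  pose N := Pmat a k *m U.
  have hN : forall (r j : 'I_k.+1), r != 0 :> nat -> N r j = ((j.+1 == r)%N)%:R.
    move=> r j hr; rewrite /N !mxE.
    transitivity ((\sum_(i < k.+1) ((if (r.-1 <= i)%N then a (i - r.-1)%N else 0) *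
                (if (i <= j)%N then D (j - i)%N else 0)))%:P).
      rewrite rmorph_sum; apply: eq_bigr => i _; rewrite !mxE (negbTE hr).
      by case: (r.-1 <= i)%N; case: (i <= j)%N; rewrite ?rmorphM ?mulr0 ?mul0r ?rmorph0.
    rewrite conv_shift // polyC_natr; case: (val r) hr => // r' _ /=.
  have hmin : row' 0 (col' ord_max N) = 1%:M.
    apply/matrixP => r c; rewrite [LHS]mxE [LHS]mxE hN; last by rewrite lift0. rewrite !mxE.
    by rewrite lift_max lift0 eqSS eq_sym.
  have hdetN : \det N = (-1) ^+ k * N 0 ord_max.
    rewrite (expand_det_col N ord_max) big_ord_recl big1 ?addr0; last first.
      move=> i _; rewrite hN ?lift0 // eqSS.
      by rewrite (gtn_eqF (ltn_ord i)) mul0r.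
    rewrite /cofactor hmin det1 mulr1 add0n /=.
    by rewrite mulrC.
  have hdetU : \det U = 1.
    rewrite -det_tr det_trig; last first.
      apply/is_trig_mxP => i j hij; rewrite !mxE leqNgt hij //.
    by apply: big1 => i _; rewrite !mxE leqnn subnn D0.
  have : \det N = \det (Pmat a k) by rewrite det_mulmx hdetU mulr1.
  rewrite hdetN /Pfk => <-.
  rewrite mulrA -exprMn mulrNN mulr1 expr1n mul1r !mxE.
  apply: eq_bigr => i _; rewrite !mxE /= leq_ord.
  rewrite -mulrA (mulrC 'X^i) mulrA -polyCM mul_polyC.
  by [].
- move=> A x y F Y Z.
  exists (fun k => D k *: x ^+ k).
  split; [|split].
  + apply: functional_extensionality => n; rewrite /ps_mul /ps_one /F.
    under eq_bigr => i _ do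
      rewrite -scalerAl -scalerAr scalerA -exprD subnKC ?(ltnSE (ltn_ord i)) //.
    rewrite -scaler_suml hD; case: (n) => [|m] /=; by rewrite ?expr0 ?scale1r ?scale0r.
  + apply: functional_extensionality => n; rewrite /ps_mul /ps_one /F.
    under eq_bigr => i _ do
      rewrite -scalerAl -scalerAr scalerA -exprD subnKC ?(ltnSE (ltn_ord i)) // mulrC.
    rewrite -scaler_suml.
    rewrite (reindex_inj rev_ord_inj) /=.
    under eq_bigr => i _ do rewrite subKn ?(ltnSE (ltn_ord i)) //.
    under eq_bigr => i _ do rewrite subSS. rewrite hD; case: (n) => [|m] /=; by rewrite ?expr0 ?scale1r ?scale0r.
  + have FY : forall m, ps_mul F Y m = a m *: x ^+ m * y.
      move=> m; rewrite /ps_mul big_ord_recr /= subnn /Y eqxx big1 ?add0r //.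
      move=> i _; rewrite subn_eq0 leqNgt ltn_ord /= mulr0 //.
    apply: functional_extensionality => n; rewrite {1}/ps_mul.
    under eq_bigr => i _ do rewrite FY.
    have -> : \sum_(i < n.+1) a i *: x ^+ i * y * (D (n - i)%N *: x ^+ (n - i)%N)
      = \sum_(i < n.+1) (a i * D (n - i)%N) *: (x ^+ i * y * x ^+ (n - i)%N).
      apply: eq_bigr => i _.
      by rewrite -scalerAr -!scalerAl scalerA mulrC.
    rewrite /Z; case: eqP => // ->.
    by rewrite big_ord1 a0 D0 mul1r scale1r expr0 mul1r mulr1.
Qed.
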